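(* Let $\alpha=\exp\left(\frac{2\pi i}{5}\right)$, let $c,x\in\mathbb{C}$, and let $(a_1,A_1),\dots,(a_p,A_p)$ and $(b_1,B_1),\dots,(b_q,B_q)$ be parameter pairs ($a_j,b_j\in\mathbb{C}$, $A_j,B_j$ nonzero reals) such that all Gamma functions involved are well defined and all series involved converge. Then $$\sum_{k=0}^{4}{}_p\Psi_q\left[\begin{array}{c}(a_1,A_1),\dots,(a_p,A_p);\\(b_1,B_1),\dots,(b_q,B_q);\end{array} c(x\alpha^k)^2\right] =5\prod_{i=1}^{4}\Gamma\!\left(\tfrac{i}{5}\right)\,{}_p\Psi_{q+4}\left[\begin{array}{c}(a_1,5A_1),\dots,(a_p,5A_p);\\ \left(\tfrac15,1\right),\left(\tfrac25,1\right),\left(\tfrac35,1\right),\left(\tfrac45,1\right),(b_1,5B_1),\dots,(b_q,5B_q);\end{array}\left(\frac{cx^2}{5}\right)^5\right].$$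
   Context: The Fox–Wright function is defined by the series $${}_p\Psi_q\left[\begin{array}{c}(\alpha_1,A_1),\dots,(\alpha_p,A_p);\\(\beta_1,B_1),\dots,(\beta_q,B_q);\end{array}z\right]=\sum_{n=0}^{\infty}\frac{\Gamma(\alpha_1+A_1n)\cdots\Gamma(\alpha_p+A_pn)}{\Gamma(\beta_1+B_1n)\cdots\Gamma(\beta_q+B_qn)}\frac{z^n}{n!},$$ where $\alpha_i,\beta_j\in\mathbb{C}$ and $A_i,B_j$ are nonzero real numbers chosen so that the Gamma products are well defined. Values of parameters and variables for which the expressions do not make sense are excluded. *)

(* Defs.v *)
From Stdlib Require Import Reals List ClassicalEpsilon Factorial.
From Coquelicot Require Import Coquelicot.
Import ListNotations.
Open Scope R_scope.

Definition Cexp (z : C) : C :=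
  (exp (Re z) * cos (Im z), exp (Re z) * sin (Im z)).

Fixpoint Cpoch0 (z : C) (n : nat) : C :=
  match n with
  | O => z
  | S m => Cmult (Cpoch0 z m) (Cplus z (RtoC (INR (S m))))
  end.

(* Gauss' product formula: n^z n! / (z (z+1) ... (z+n)) *)
Definition gauss_seq (z : C) (n : nat) : C :=
  Cdiv (Cmult (Cexp (Cmult z (RtoC (ln (INR n))))) (RtoC (INR (fact n))))
       (Cpoch0 z n).

(* The (complex) Gamma function, defined as the limit of Gauss' sequence
   (this is valid for every z that is not a nonpositive integer). *)
Definition CGamma (z : C) : C :=
  epsilon (inhabits (RtoC 0))
    (fun l => filterlim (gauss_seq z) eventually (locally l)).

Definition Gamma_pole (z : C) : Prop := exists m : nat, z = RtoC (- INR m).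

Definition CSeries (a : nat -> C) : C :=
  epsilon (inhabits (RtoC 0)) (fun l => is_series a l).

Definition Gamma_prod (ps : list (C * R)) (n : nat) : C :=
  fold_right (fun p acc => Cmult (CGamma (Cplus (fst p) (RtoC (snd p * INR n)))) acc)
             (RtoC 1) ps.

(* n-th term of the Fox--Wright series pPsi_q[(alpha_i,A_i);(beta_j,B_j); z] *)
Definition FW_term (als bes : list (C * R)) (z : C) (n : nat) : C :=
  Cmult (Cdiv (Gamma_prod als n) (Gamma_prod bes n))
        (Cdiv (Cpow z n) (RtoC (INR (fact n)))).

Definition FoxWright (als bes : list (C * R)) (z : C) : C :=
  CSeries (FW_term als bes z).

Definition scale_pars (s : R) (ps : list (C * R)) : list (C * R) :=
  map (fun p => (fst p, s * snd p)) ps.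

Definition alpha5 : C := Cexp (0, 2 * PI / 5).

(* Main.v *)
Require Import Defs.
From Stdlib Require Import Reals List Lra Lia ClassicalEpsilon Classical Factorial.
From Coquelicot Require Import Coquelicot.
Import ListNotations.
Open Scope R_scope.

Fixpoint pr (r:R) (n:nat) : R := match n with O => r | S m => pr r m * (r + INR (S m)) end.
Definition gr r n := exp (r * ln (INR n)) * INR (fact n) / pr r n.

Lemma pr_pos r n : 0 < r -> 0 < pr r n.
Proof. intros H; induction n; cbn [pr]; [lra|]. apply Rmult_lt_0_compat; auto.
  pose proof (pos_INR (S n)); lra. Qed.

Lemma INR_pos1 n : (1 <= n)%nat -> 0 < INR n.
Proof. intros; apply lt_0_INR; lia. Qed.

Lemma exp_le x y : x <= y -> exp x <= exp y.
Proof. intros [H|H]. left; apply exp_increasing; auto. right; subst; auto. Qed.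

Lemma ln_le_m1 y : 0 < y -> ln y <= y - 1.
Proof. intros Hy. pose proof (exp_ineq1_le (y-1)).
  rewrite <- (ln_exp (y-1)). apply ln_le; lra. Qed.

Lemma ln_diff_bounds n : (1 <= n)%nat ->
  1 / INR (S n) <= ln (INR (S n)) - ln (INR n) <= 1 / INR n.
Proof. intros Hn. pose proof (INR_pos1 n Hn) as H0. rewrite S_INR in *. split.
  - assert (ln (INR n / (INR n + 1)) <= INR n / (INR n + 1) - 1) by
      (apply ln_le_m1; apply Rdiv_lt_0_compat; lra).
    rewrite ln_div in H by lra.
    assert (INR n / (INR n + 1) - 1 = - (1 / (INR n + 1))) by (field; lra). lra.
  - assert (ln ((INR n + 1) / INR n) <= (INR n + 1) / INR n - 1) by
      (apply ln_le_m1; apply Rdiv_lt_0_compat; lra).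
    rewrite ln_div in H by lra.
    assert ((INR n + 1) / INR n - 1 = 1 / INR n) by (field; lra). lra.
Qed.

Lemma gr_step r n : 0 < r -> (1 <= n)%nat ->
  gr r (S n) = gr r n * (exp (r * (ln (INR (S n)) - ln (INR n))) * (INR (S n) / (r + INR (S n)))).
Proof. intros Hr Hn. unfold gr.
  assert (E : exp (r * ln (INR (S n))) = exp (r * ln (INR n)) * exp (r * (ln (INR (S n)) - ln (INR n)))).
  { rewrite <- exp_plus. f_equal. ring. }
  rewrite E. change (fact (S n)) with (S n * fact n)%nat. rewrite mult_INR. cbn [pr].
  pose proof (pr_pos r n Hr). pose proof (pos_INR (S n)). field. split; lra.
Qed.

Lemma gr_pos r n : 0 < r -> 0 < gr r n.
Proof. intros Hr. unfold gr. pose proof (pr_pos r n Hr). pose proof (exp_pos (r * ln (INR n))).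
  pose proof (lt_0_INR _ (lt_O_fact n)). apply Rdiv_lt_0_compat; auto. apply Rmult_lt_0_compat; auto. Qed.

Lemma gr_grow r n : 0 < r -> (1 <= n)%nat -> gr r n <= gr r (S n).
Proof. intros Hr Hn. rewrite (gr_step r n Hr Hn). pose proof (gr_pos r n Hr).
  destruct (ln_diff_bounds n Hn) as [H1 H2]. set (d := ln (INR (S n)) - ln (INR n)) in *.
  pose proof (exp_ineq1_le (r*d)). pose proof (pos_INR (S n)).
  assert (INR (S n) > 0) by (apply lt_0_INR; lia).
  assert (1 + r / INR (S n) <= 1 + r * d).
  { apply Rplus_le_compat_l. unfold Rdiv. rewrite <- (Rmult_1_r r) at 1. rewrite Rmult_assoc.
    apply Rmult_le_compat_l; lra. }
  assert ((1 + r / INR (S n)) * (INR (S n) / (r + INR (S n))) = 1) by (field; lra).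
  assert (1 <= exp (r * d) * (INR (S n) / (r + INR (S n)))).
  { rewrite <- H6. apply Rmult_le_compat_r. apply Rlt_le, Rdiv_lt_0_compat; lra. lra. }
  rewrite <- (Rmult_1_r (gr r n)) at 1. apply Rmult_le_compat_l; lra.
Qed.

Lemma gr_bound r n : 0 < r -> (1 <= n)%nat ->
  gr r n <= gr r 1 * exp (r*(1+r) - r*(1+r) / INR n).
Proof. intros Hr Hn. induction Hn.
  - simpl INR. replace (r * (1 + r) - r * (1 + r) / 1) with 0 by field. rewrite exp_0. lra.
  - rename m into n. set (K := r*(1+r)) in *. rewrite (gr_step r n Hr Hn).
    destruct (ln_diff_bounds n Hn) as [H1 H2]. set (d := ln (INR (S n)) - ln (INR n)) in *.
    pose proof (INR_pos1 n Hn) as Hn0. pose proof (INR_pos1 (S n) ltac:(lia)) as Hn1.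
    assert (Ed : exp (r*d) <= exp (r / INR n)).
    { apply exp_le. unfold Rdiv. rewrite <- (Rmult_1_r r) at 2. rewrite Rmult_assoc. apply Rmult_le_compat_l; lra. }
    set (v := K / INR n - K / INR (S n) - r / INR n).
    assert (Ev : exp (K / INR n - K / INR (S n)) = exp (r / INR n) * exp v).
    { rewrite <- exp_plus. f_equal. unfold v. ring. }
    assert (Hv : INR (S n) / (r + INR (S n)) <= exp v).
    { pose proof (exp_ineq1_le v). enough (INR (S n) / (r + INR (S n)) <= 1 + v) by lra.
      unfold v, K. rewrite S_INR in *. 
      assert (1 + (r * (1 + r) / INR n - r * (1 + r) / (INR n + 1) - r / INR n) - (INR n + 1) / (r + (INR n + 1))
         = r * (r + r*r) / (INR n * (INR n + 1) * (r + INR n + 1))) by (field; lra).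
      assert (0 <= r * (r + r*r) / (INR n * (INR n + 1) * (r + INR n + 1))).
      { apply Rle_mult_inv_pos. nra. apply Rmult_lt_0_compat; [nra|lra]. }
      lra. }
    assert (E2 : exp (K - K / INR (S n)) = exp (K - K / INR n) * exp (K / INR n - K / INR (S n))).
    { rewrite <- exp_plus. f_equal. ring. }
    rewrite E2, Ev.
    assert (0 <= INR (S n) / (r + INR (S n))) by (apply Rlt_le, Rdiv_lt_0_compat; lra).
    pose proof (gr_pos r n Hr). pose proof (exp_pos (r*d)).
    assert (exp (r * d) * (INR (S n) / (r + INR (S n))) <= exp (r / INR n) * exp v).
    { apply Rmult_le_compat; auto; lra. }
    replace (gr r 1 * (exp (K - K / INR n) * (exp (r / INR n) * exp v))) with
       ((gr r 1 * exp (K - K / INR n)) * (exp (r / INR n) * exp v)) by ring.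
    apply Rmult_le_compat; auto; try lra. apply Rmult_le_pos; lra.
Qed.

Lemma gamma_exists r : 0 < r -> exists l, 0 < l /\ is_lim_seq (gr r) l.
Proof. intros Hr.
  set (u := fun k => gr r (S k)).
  assert (Hg : Un_growing u). { intro k. unfold u. apply gr_grow; auto; lia. }
  assert (Hb : has_ub u).
  { exists (gr r 1 * exp (r*(1+r))). intros y [k ->]. unfold u.
    eapply Rle_trans. apply gr_bound; auto; lia. apply Rmult_le_compat_l.
    apply Rlt_le, gr_pos; auto. apply exp_le.
    assert (0 <= r * (1 + r) / INR (S k)). { apply Rle_mult_inv_pos. nra. apply lt_0_INR; lia. }
    lra. }
  destruct (growing_cv u Hg Hb) as [l Hl]. exists l. split.
  - pose proof (growing_ineq u l Hg Hl 0). unfold u in H. pose proof (gr_pos r 1 Hr). lra.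
  - apply is_lim_seq_incr_1. apply is_lim_seq_Reals. exact Hl.
Qed.

Lemma pr_shift r n : r * pr (r+1) n = pr r (S n).
Proof. induction n.
  - cbn [pr]. simpl INR. ring.
  - cbn [pr] in *. rewrite <- Rmult_assoc, IHn. cbn [pr]. rewrite !S_INR. ring. Qed.

Lemma gr_shift r n : 0 < r -> (1 <= n)%nat -> gr (r+1) n = gr r n * (r * INR n / (r + INR n + 1)).
Proof. intros Hr Hn. unfold gr. pose proof (INR_pos1 n Hn).
  assert (E : exp ((r+1) * ln (INR n)) = exp (r * ln (INR n)) * INR n).
  { replace (exp (r * ln (INR n)) * INR n) with (exp (r * ln (INR n)) * exp (ln (INR n))) by (rewrite exp_ln; lra). rewrite <- exp_plus. f_equal. ring. }
  rewrite E. pose proof (pr_shift r n). cbn [pr] in H0. rewrite S_INR in H0.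
  pose proof (pr_pos (r+1) n ltac:(lra)). pose proof (pr_pos r n Hr).
  assert (pr (r+1) n = pr r n * (r + (INR n + 1)) / r) by (rewrite <- H0; field; lra).
  rewrite H3. field. repeat split; lra. Qed.

Lemma lim_frac r : 0 < r -> is_lim_seq (fun n => r * INR n / (r + INR n + 1)) r.
Proof. intros Hr.
  apply is_lim_seq_ext with (fun n => r - r * (r+1) * / (INR n + (r + 1))).
  { intro n. pose proof (pos_INR n). field. lra. }
  replace (Finite r) with (Finite (r - r*(r+1)*0)) by (f_equal; ring).
  apply is_lim_seq_minus'. apply is_lim_seq_const.
  apply (is_lim_seq_scal_l _ _ (Finite 0)).
  replace (Finite 0) with (Rbar_inv p_infty) by reflexivity.
  apply is_lim_seq_inv; [| discriminate].
  eapply is_lim_seq_plus. apply is_lim_seq_INR. apply is_lim_seq_const. simpl. reflexivity.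
Qed.

Lemma gamma_shift_lim r (l:R) : 0 < r -> is_lim_seq (gr r) l -> is_lim_seq (gr (r+1)) (l * r).
Proof. intros Hr Hl.
  apply is_lim_seq_ext_loc with (fun n => gr r n * (r * INR n / (r + INR n + 1))).
  { exists 1%nat. intros n Hn. symmetry. apply gr_shift; auto. }
  apply is_lim_seq_mult'; auto. apply lim_frac; auto. Qed.

Fixpoint poch (r:R) (m:nat) : R := match m with O => 1 | S k => poch r k * (r + INR k) end.

Lemma poch_pos r m : 0 < r -> 0 < poch r m.
Proof. intros; induction m; cbn [poch]; [lra|]. pose proof (pos_INR m). apply Rmult_lt_0_compat; lra. Qed.

Lemma gamma_poch_lim r (l:R) m : 0 < r -> is_lim_seq (gr r) l -> is_lim_seq (gr (r + INR m)) (l * poch r m).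
Proof. intros Hr Hl. induction m.
  - cbn [poch INR]. rewrite Rplus_0_r, Rmult_1_r; auto.
  - rewrite S_INR. replace (r + (INR m + 1)) with ((r + INR m) + 1) by ring.
    cbn [poch]. rewrite <- Rmult_assoc. apply gamma_shift_lim; auto. pose proof (pos_INR m); lra. Qed.

Lemma Cpoch0_R r n : Cpoch0 (RtoC r) n = RtoC (pr r n).
Proof. induction n; simpl Cpoch0; cbn [pr]; auto. rewrite IHn, <- RtoC_plus, <- RtoC_mult. auto. Qed.

Lemma Cexp_R r : Cexp (RtoC r) = RtoC (exp r).
Proof. unfold Cexp, RtoC. simpl. rewrite cos_0, sin_0. f_equal; ring. Qed.

Lemma gauss_R r n : 0 < r -> gauss_seq (RtoC r) n = RtoC (gr r n).
Proof. intros Hr. unfold gauss_seq, gr. rewrite Cpoch0_R, <- RtoC_mult, Cexp_R, <- RtoC_mult.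
  rewrite <- RtoC_div; auto. pose proof (pr_pos r n Hr); lra. Qed.

Lemma lim_RtoC (u : nat -> R) (l:R) : is_lim_seq u l ->
  filterlim (fun n => RtoC (u n)) eventually (locally (RtoC l)).
Proof. intros H. apply filterlim_locally. intros eps.
  apply is_lim_seq_spec in H. destruct (H eps) as [N HN]. exists N. intros n Hn.
  split. simpl. apply HN; auto. apply ball_center. Qed.

Lemma CGamma_R r (l:R) : 0 < r -> is_lim_seq (gr r) l -> CGamma (RtoC r) = RtoC l.
Proof. intros Hr Hl. unfold CGamma.
  assert (Hf : filterlim (gauss_seq (RtoC r)) eventually (locally (RtoC l))).
  { eapply filterlim_ext. intro n. symmetry. apply gauss_R; auto. apply lim_RtoC; auto. }
  pose proof (epsilon_spec (inhabits (RtoC 0)) (fun l => filterlim (gauss_seq (RtoC r)) eventually (locally l)) (ex_intro _ (RtoC l) Hf)) as H.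
  cbv beta in H.
  set (e := epsilon _ _) in *.
  exact (@filterlim_locally_unique nat C_AbsRing C_NormedModule eventually (Proper_StrongProper _ eventually_filter) (gauss_seq (RtoC r)) e (RtoC l) H Hf).
Qed.

Lemma fact5 m : INR (fact (5*m)) = 5^(5*m) * INR (fact m) * poch (1/5) m * poch (2/5) m * poch (3/5) m * poch (4/5) m.
Proof. induction m.
  - simpl. ring.
  - replace (5 * S m)%nat with (S (S (S (S (S (5*m))))))%nat by lia.
    rewrite !fact_simpl, !mult_INR, IHm.
    cbn [poch]. rewrite !S_INR. rewrite mult_INR.
    replace (5 ^ S (S (S (S (S (5 * m)))))) with (5^(5*m) * 5^5) by (rewrite <- pow_add; f_equal; lia).
    replace (INR 5) with 5 by (simpl; ring). set (P := 5 ^ (5*m)). field. Qed.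

Lemma Cpow_add a m n : Cpow a (m + n) = (Cpow a m * Cpow a n)%C.
Proof. induction m; simpl. ring. rewrite IHm. ring. Qed.
Lemma Cpow_mul_distr a b n : Cpow (a*b) n = (Cpow a n * Cpow b n)%C.
Proof. induction n; simpl. ring. rewrite IHn. ring. Qed.
Lemma Cpow_pow a m n : Cpow (Cpow a m) n = Cpow a (m*n).
Proof. induction n; simpl. rewrite Nat.mul_0_r. auto. rewrite IHn.
  replace (m * S n)%nat with (m + m*n)%nat by lia. rewrite Cpow_add. auto. Qed.

Lemma alpha_pow k : Cpow alpha5 k = (cos (2*PI/5 * INR k), sin (2*PI/5 * INR k)).
Proof. induction k.
  - simpl. rewrite Rmult_0_r, cos_0, sin_0. auto.
  - change (Cpow alpha5 (S k)) with (alpha5 * Cpow alpha5 k)%C. rewrite IHk, S_INR. unfold alpha5, Cexp. simpl. rewrite exp_0.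
    replace (2 * PI / 5 * (INR k + 1)) with (2*PI/5 * INR k + 2*PI/5) by ring.
    rewrite cos_plus, sin_plus. unfold Cmult. simpl. f_equal; ring. Qed.

Lemma alpha5_5 : Cpow alpha5 5 = 1%C.
Proof. rewrite alpha_pow. replace (2*PI/5 * INR 5) with (2*PI) by (simpl; field).
  rewrite cos_2PI, sin_2PI. auto. Qed.

Lemma alpha_ne1 r : (1 <= r <= 4)%nat -> Cpow alpha5 r <> 1%C.
Proof. intros Hr E. rewrite alpha_pow in E. injection E as _ E2.
  pose proof PI_RGT_0.
  assert (HH : (r = 1 \/ r = 2 \/ r = 3 \/ r = 4)%nat) by lia.
  destruct HH as [HH|[HH|[HH|HH]]]; subst r; simpl INR in E2.
  - pose proof (sin_gt_0 (2*PI/5*1)). lra.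
  - pose proof (sin_gt_0 (2*PI/5*(1+1))). lra.
  - pose proof (sin_lt_0 (2*PI/5*(1+1+1))). lra.
  - pose proof (sin_lt_0 (2*PI/5*(1+1+1+1))). lra.
Qed.

Definition S5 (b : C) : C := (1 + b + b*b + b*b*b + b*b*b*b)%C.

Lemma S5_zero b : Cpow b 5 = 1%C -> b <> 1%C -> S5 b = 0%C.
Proof. intros H5 H1. assert (E : ((b - 1) * S5 b = 0)%C).
  { assert (E5 : Cpow b 5 = (b*b*b*b*b)%C) by (simpl; ring).
    unfold S5. transitivity (Cpow b 5 - 1)%C. rewrite E5. ring. rewrite H5. ring. }
  assert (b - 1 <> 0)%C. { intro. apply H1. apply Ceq_minus. auto. }
  replace (S5 b) with (/ (b-1) * ((b - 1) * S5 b))%C by (field; auto).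
  rewrite E. ring. Qed.

Lemma S5_alpha n : S5 (Cpow alpha5 (2*n)) = if (n mod 5 =? 0)%nat then 5%C else 0%C.
Proof.
  assert (Hp : forall q r, Cpow alpha5 (5*q + r) = Cpow alpha5 r).
  { intros. rewrite Cpow_add, <- Cpow_pow, alpha5_5, Cpow_1_l. ring. }
  assert (Hn := Nat.div_mod n 5 ltac:(lia)). assert (Hr := Nat.mod_upper_bound n 5 ltac:(lia)).
  set (q := (n / 5)%nat) in *. set (r := (n mod 5)%nat) in *.
  assert (r = 0 \/ r = 1 \/ r = 2 \/ r = 3 \/ r = 4)%nat as [E|[E|[E|[E|E]]]] by lia; rewrite E; simpl Nat.eqb.
  - replace (2*n)%nat with (5*(2*q) + 0)%nat by lia. rewrite Hp. unfold S5; simpl. 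
    apply injective_projections; simpl; ring.
  - replace (2*n)%nat with (5*(2*q) + 2)%nat by lia. rewrite Hp. apply S5_zero.
    rewrite Cpow_pow. replace (2*5)%nat with (5*2+0)%nat by lia. rewrite Hp. auto. apply alpha_ne1; lia.
  - replace (2*n)%nat with (5*(2*q) + 4)%nat by lia. rewrite Hp. apply S5_zero.
    rewrite Cpow_pow. replace (4*5)%nat with (5*4+0)%nat by lia. rewrite Hp. auto. apply alpha_ne1; lia.
  - replace (2*n)%nat with (5*(2*q+1) + 1)%nat by lia. rewrite Hp. apply S5_zero.
    rewrite Cpow_pow. replace (1*5)%nat with (5*1+0)%nat by lia. rewrite Hp. auto. apply alpha_ne1; lia.
  - replace (2*n)%nat with (5*(2*q+1) + 3)%nat by lia. rewrite Hp. apply S5_zero.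
    rewrite Cpow_pow. replace (3*5)%nat with (5*3+0)%nat by lia. rewrite Hp. auto. apply alpha_ne1; lia.
Qed.

Lemma plus_C (a b : C) : @plus C_AbelianMonoid a b = Cplus a b.
Proof. reflexivity. Qed.

Lemma sum_n_5 (f : nat -> C) : sum_n f 4 = (f 0%nat + f 1%nat + f 2%nat + f 3%nat + f 4%nat)%C.
Proof. rewrite !sum_Sn, sum_O, !plus_C. reflexivity. Qed.

Lemma Cinv0 : Cinv 0 = 0.
Proof. unfold Cinv. simpl.
  apply injective_projections; simpl; unfold Rdiv; rewrite ?Ropp_0; apply Rmult_0_l. Qed.

Lemma Gamma_prod_scale ps q : Gamma_prod (scale_pars 5 ps) q = Gamma_prod ps (5*q).
Proof. induction ps as [|p ps IH]; [reflexivity|]. unfold Gamma_prod, scale_pars in *. cbn [map fold_right] in *. rewrite IH. cbn [fst snd].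
  rewrite (mult_INR 5 q). replace (INR 5) with 5 by (simpl; ring).
  replace (5 * snd p * INR q) with (snd p * (5 * INR q)) by ring. reflexivity. Qed.

Lemma Gamma_prod_app l1 l2 q : Gamma_prod (l1 ++ l2) q = (Gamma_prod l1 q * Gamma_prod l2 q)%C.
Proof. induction l1 as [|p l IH]; simpl. ring. rewrite IH. ring. Qed.

Lemma CSeries_spec a : ex_series a -> is_series a (CSeries a).
Proof. intros [l Hl]. unfold CSeries.
  exact (epsilon_spec (inhabits (RtoC 0)) (fun l => is_series a l) (ex_intro _ l Hl)). Qed.

Lemma is_series_C_unique (a : nat -> C) l1 l2 : is_series a l1 -> is_series a l2 -> l1 = l2.
Proof. intros H1 H2.
  exact (@filterlim_locally_unique nat C_AbsRing C_NormedModule eventually (Proper_StrongProper _ eventually_filter) (sum_n a) l1 l2 H1 H2). Qed.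

Lemma subseq5 (F : nat -> C) L : is_series F L ->
  (forall q r, (0 < r < 5)%nat -> F (5*q + r)%nat = 0%C) -> is_series (fun q => F (5*q)%nat) L.
Proof. intros HL H0.
  assert (E : forall m, sum_n (fun q => F (5*q)%nat) m = sum_n F (5*m+4)).
  { induction m.
    - rewrite sum_O. simpl. rewrite sum_n_5.
      replace (F 1%nat) with (RtoC 0) by (symmetry; apply (H0 0%nat 1%nat); lia).
      replace (F 2%nat) with (RtoC 0) by (symmetry; apply (H0 0%nat 2%nat); lia).
      replace (F 3%nat) with (RtoC 0) by (symmetry; apply (H0 0%nat 3%nat); lia).
      replace (F 4%nat) with (RtoC 0) by (symmetry; apply (H0 0%nat 4%nat); lia).
      ring.
    - rewrite sum_Sn, IHm. replace (5 * S m + 4)%nat with (S (S (S (S (S (5*m+4))))))%nat by lia.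
      rewrite !sum_Sn, !plus_C.
      replace (S (S (S (S (S (5 * m + 4))))))%nat with (5*(S m) + 4)%nat by lia.
      replace (S (S (S (S (5 * m + 4)))))%nat with (5*(S m) + 3)%nat by lia.
      replace (S (S (S (5 * m + 4))))%nat with (5*(S m) + 2)%nat by lia.
      replace (S (S (5 * m + 4)))%nat with (5*(S m) + 1)%nat by lia.
      replace (S (5 * m + 4))%nat with (5*(S m) + 0)%nat by lia.
      rewrite (H0 (S m) 1%nat ltac:(lia)), (H0 (S m) 2%nat ltac:(lia)), (H0 (S m) 3%nat ltac:(lia)), (H0 (S m) 4%nat ltac:(lia)). rewrite Nat.add_0_r. unfold plus; simpl. ring. }
  unfold is_series. eapply filterlim_ext. intro m. symmetry. apply E.
  eapply filterlim_comp; [| exact HL].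
  intros P [N HN]. exists N. intros n Hn. apply HN. lia.
Qed.

Lemma RtoC_nz r : r <> 0 -> RtoC r <> RtoC 0.
Proof. intros H E. apply H. apply RtoC_inj. exact E. Qed.

Lemma Cpow_div a b n : b <> RtoC 0 -> Cpow (a / b) n = (Cpow a n / Cpow b n)%C.
Proof. intros Hb. unfold Cdiv. rewrite Cpow_mul_distr, Cpow_inv; auto. Qed.

Lemma GP4 a1 a2 a3 a4 q : Gamma_prod [(a1,1);(a2,1);(a3,1);(a4,1)] q =
  (CGamma (a1 + RtoC (1 * INR q)) * (CGamma (a2 + RtoC (1 * INR q)) * (CGamma (a3 + RtoC (1 * INR q)) * (CGamma (a4 + RtoC (1 * INR q)) * 1))))%C.
Proof. reflexivity. Qed.

Lemma mod5 q r : (r < 5)%nat -> ((5*q + r) mod 5 = r)%nat.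
Proof. intros. rewrite Nat.add_comm, Nat.mul_comm, Nat.Div0.mod_add. apply Nat.mod_small; auto. Qed.

Lemma key (Ga Gb z : C) (q : nat) (g1 g2 g3 g4 : R) :
  0 < g1 -> 0 < g2 -> 0 < g3 -> 0 < g4 ->
  (((Ga / Gb) * (Cpow z (5*q) / RtoC (INR (fact (5*q))))) * RtoC 5)%C =
  ((RtoC 5 * (RtoC g1 * (RtoC g2 * (RtoC g3 * RtoC g4)))) *
  ((Ga / ((RtoC (g1 * poch (1/5) q) * (RtoC (g2 * poch (2/5) q) * (RtoC (g3 * poch (3/5) q) * RtoC (g4 * poch (4/5) q)))) * Gb)) *
   (Cpow (Cpow (z / RtoC 5) 5) q / RtoC (INR (fact q)))))%C.
Proof. intros H1 H2 H3 H4.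
  rewrite Cpow_pow, Cpow_div by (apply RtoC_nz; lra). rewrite <- RtoC_pow, fact5.
  pose proof (poch_pos (1/5) q ltac:(lra)). pose proof (poch_pos (2/5) q ltac:(lra)).
  pose proof (poch_pos (3/5) q ltac:(lra)). pose proof (poch_pos (4/5) q ltac:(lra)).
  pose proof (lt_0_INR _ (lt_O_fact q)). pose proof (pow_lt 5 (5*q) ltac:(lra)).
  rewrite !RtoC_mult.
  set (p1 := poch (1/5) q) in *. set (p2 := poch (2/5) q) in *. set (p3 := poch (3/5) q) in *. set (p4 := poch (4/5) q) in *.
  set (f := INR (fact q)) in *. set (P := 5 ^ (5*q)) in *. set (Z := Cpow z (5*q)).
  assert (RtoC g1 <> 0) by (apply RtoC_nz; lra). assert (RtoC g2 <> 0) by (apply RtoC_nz; lra).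
  assert (RtoC g3 <> 0) by (apply RtoC_nz; lra). assert (RtoC g4 <> 0) by (apply RtoC_nz; lra).
  assert (RtoC p1 <> 0) by (apply RtoC_nz; lra). assert (RtoC p2 <> 0) by (apply RtoC_nz; lra).
  assert (RtoC p3 <> 0) by (apply RtoC_nz; lra). assert (RtoC p4 <> 0) by (apply RtoC_nz; lra).
  assert (RtoC f <> 0) by (apply RtoC_nz; lra). assert (RtoC P <> 0) by (apply RtoC_nz; lra).
  destruct (classic (Gb = RtoC 0)) as [E|E].
  - rewrite E. rewrite !Cmult_0_r. unfold Cdiv. rewrite Cinv0. ring.
  - field. repeat split; auto.
Qed.

Lemma Gq (r g : R) q : 0 < r -> is_lim_seq (gr r) g -> 
  CGamma (RtoC r + RtoC (1 * INR q))%C = RtoC (g * poch r q).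
Proof. intros Hr Hg. rewrite Rmult_1_l, <- RtoC_plus. apply CGamma_R.
  pose proof (pos_INR q); lra. apply gamma_poch_lim; auto. Qed.

Lemma T_form (als bes : list (C * R)) c x k n :
  FW_term als bes (c * Cpow (x * Cpow alpha5 k) 2)%C n =
  ((Gamma_prod als n / Gamma_prod bes n) * (Cpow (c * Cpow x 2) n / RtoC (INR (fact n))) * Cpow (Cpow alpha5 (2*n)) k)%C.
Proof. unfold FW_term. rewrite !Cpow_mul_distr, !Cpow_pow.
  replace (k * (2 * n))%nat with (2 * n * k)%nat by lia. unfold Cdiv.
  set (a1 := Cpow c n). set (a2 := Cpow x (2*n)). set (a3 := Cpow alpha5 (2*n*k)). ring. Qed.

Theorem theorem3 (c x : C) (als bes : list (C * R)) :
  (forall p, In p als -> snd p <> 0) ->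
  (forall p, In p bes -> snd p <> 0) ->
  (forall p n, In p als -> ~ Gamma_pole (Cplus (fst p) (RtoC (snd p * INR n)))) ->
  (forall p n, In p bes -> ~ Gamma_pole (Cplus (fst p) (RtoC (snd p * INR n)))) ->
  (forall k : nat, (k <= 4)%nat ->
     ex_series (FW_term als bes (Cmult c (Cpow (Cmult x (Cpow alpha5 k)) 2)))) ->
  ex_series (FW_term (scale_pars 5 als)
               ([(RtoC (1/5), 1); (RtoC (2/5), 1); (RtoC (3/5), 1); (RtoC (4/5), 1)]
                ++ scale_pars 5 bes)
               (Cpow (Cdiv (Cmult c (Cpow x 2)) (RtoC 5)) 5)) ->
  sum_n (fun k => FoxWright als bes (Cmult c (Cpow (Cmult x (Cpow alpha5 k)) 2))) 4
  = Cmult (Cmult (RtoC 5)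
             (Cmult (CGamma (RtoC (1/5)))
               (Cmult (CGamma (RtoC (2/5)))
                 (Cmult (CGamma (RtoC (3/5))) (CGamma (RtoC (4/5)))))))
          (FoxWright (scale_pars 5 als)
               ([(RtoC (1/5), 1); (RtoC (2/5), 1); (RtoC (3/5), 1); (RtoC (4/5), 1)]
                ++ scale_pars 5 bes)
               (Cpow (Cdiv (Cmult c (Cpow x 2)) (RtoC 5)) 5)).
Proof.
  intros _ _ _ _ Hk HR.
  destruct (gamma_exists (1/5) ltac:(lra)) as [g1 [Hg1 Hl1]].
  destruct (gamma_exists (2/5) ltac:(lra)) as [g2 [Hg2 Hl2]].
  destruct (gamma_exists (3/5) ltac:(lra)) as [g3 [Hg3 Hl3]].
  destruct (gamma_exists (4/5) ltac:(lra)) as [g4 [Hg4 Hl4]].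
  rewrite (CGamma_R (1/5) g1), (CGamma_R (2/5) g2), (CGamma_R (3/5) g3), (CGamma_R (4/5) g4) by (auto; lra).
  set (z := (c * Cpow x 2)%C).
  set (A := fun n => ((Gamma_prod als n / Gamma_prod bes n) * (Cpow z n / RtoC (INR (fact n))))%C).
  set (T := fun k => FW_term als bes (c * Cpow (x * Cpow alpha5 k) 2)%C).
  set (V := fun k => FoxWright als bes (c * Cpow (x * Cpow alpha5 k) 2)%C).
  assert (HV : forall k, (k <= 4)%nat -> is_series (T k) (V k)).
  { intros k Hk4. apply CSeries_spec. apply Hk; auto. }
  assert (Hsum : is_series (fun n => T 0%nat n + T 1%nat n + T 2%nat n + T 3%nat n + T 4%nat n)%C
                           (V 0%nat + V 1%nat + V 2%nat + V 3%nat + V 4%nat)%C).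
  { exact (is_series_plus _ _ _ _ (is_series_plus _ _ _ _ (is_series_plus _ _ _ _ (is_series_plus _ _ _ _
       (HV 0%nat ltac:(lia)) (HV 1%nat ltac:(lia))) (HV 2%nat ltac:(lia))) (HV 3%nat ltac:(lia))) (HV 4%nat ltac:(lia))). }
  set (F := fun n => (A n * S5 (Cpow alpha5 (2*n)))%C).
  assert (HF : is_series F (V 0%nat + V 1%nat + V 2%nat + V 3%nat + V 4%nat)%C).
  { eapply is_series_ext; [| exact Hsum]. intro n. unfold T, F, A. rewrite !T_form. unfold S5.
    fold z. set (be := Cpow alpha5 (2*n)). set (G0 := (Gamma_prod als n / Gamma_prod bes n)%C). set (Zn := (Cpow z n / RtoC (INR (fact n)))%C). simpl Cpow. match goal with |- ?a = ?b => change (@eq C a b) end; ring. }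
  assert (HF0 : forall q r, (0 < r < 5)%nat -> F (5*q + r)%nat = RtoC 0).
  { intros q r Hr. unfold F. rewrite S5_alpha, mod5 by lia.
    destruct r as [|r]; [lia|]. simpl Nat.eqb. cbv iota. ring. }
  pose proof (subseq5 F _ HF HF0) as Hsub.
  set (FW' := FW_term (scale_pars 5 als)
               ([(RtoC (1/5), 1); (RtoC (2/5), 1); (RtoC (3/5), 1); (RtoC (4/5), 1)]
                ++ scale_pars 5 bes) (Cpow (Cdiv (Cmult c (Cpow x 2)) (RtoC 5)) 5)).
  set (K := (RtoC 5 * (RtoC g1 * (RtoC g2 * (RtoC g3 * RtoC g4))))%C).
  pose proof (CSeries_spec _ HR) as HW. fold FW' in HW.
  assert (HKW : is_series (fun q => K * FW' q)%C (K * CSeries FW')%C).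
  { exact (is_series_scal_l K _ _ HW). }
  assert (Hpt : forall q, F (5*q)%nat = (K * FW' q)%C).
  { intro q. unfold F, FW', FW_term, K. rewrite S5_alpha.
    replace (5 * q mod 5)%nat with 0%nat by (symmetry; rewrite <- (Nat.add_0_r (5*q)); apply (mod5 q 0); lia). simpl Nat.eqb.
    rewrite Gamma_prod_app, !Gamma_prod_scale, GP4.
    rewrite (Gq (1/5) g1), (Gq (2/5) g2), (Gq (3/5) g3), (Gq (4/5) g4) by (auto; lra).
    rewrite Cmult_1_r. unfold A. fold z. apply key; auto. }
  assert (HKW' : is_series (fun q => F (5*q)%nat) (K * CSeries FW')%C).
  { eapply is_series_ext; [| exact HKW]. intro q. symmetry. apply Hpt. }
  rewrite sum_n_5. unfold FoxWright. fold FW'.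
  apply (is_series_C_unique _ _ _ Hsub HKW').
Qed.
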